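(* A reaction network $(X,\mathscr{R})$ admits a sum formula realization if and only if it is conservative.
   Context: A reaction network (RN) $(X,\mathscr{R})$ consists of a finite non-empty set $X$ of species and a finite non-empty set $\mathscr{R}$ of reactions. Each reaction $r$ is given by stoichiometric coefficients $s^-_{xr},s^+_{xr}\in\mathbb{N}_0$. The stoichiometric matrix $S\in\mathbb{Z}^{X\times\mathscr{R}}$ has entries $S_{xr}=s^+_{xr}-s^-_{xr}$. The paper assumes throughout that RNs are closed: every reaction $r$ has $x,y$ with $S_{xr}<0<S_{yr}$. The RN is conservative if there is $m\in\mathbb{R}^X$ with all entries positive and $m^\top S=0$. A sum formula realization (sf-realization) is a matrix $A\in\mathbb{N}_0^{\mathcal{A}\times X}$, for some non-empty finite set $\mathcal{A}$ of ''atoms'', such that: - (i) every column of $A$ is nonzero; - (ii) $\operatorname{im}A^\top=\ker S^\top$ as subspaces of $\mathbb{R}^X$. *)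

(* Defs.v *)
From HB Require Import structures.
From mathcomp Require Import all_boot all_order all_algebra.
Set Implicit Arguments. Unset Strict Implicit. Unset Printing Implicit Defensive.
Import Order.TTheory GRing.Theory Num.Theory.
Local Open Scope ring_scope.

(* A reaction network with species X = 'I_n and reactions 'I_r is given by
   the stoichiometric coefficients s^-_{xr} = sm x r and s^+_{xr} = sp x r. *)

Definition stoich (n r : nat) (sm sp : 'M[nat]_(n, r)) : 'M[int]_(n, r) :=
  \matrix_(x, j) ((sp x j)%:Z - (sm x j)%:Z).

Definition stoichR (R : realFieldType) (n r : nat) (sm sp : 'M[nat]_(n, r))
  : 'M[R]_(n, r) := map_mx (fun z : int => z%:~R) (stoich sm sp).

Definition closed_RN (n r : nat) (sm sp : 'M[nat]_(n, r)) : Prop :=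
  forall j : 'I_r, exists x y : 'I_n,
    (stoich sm sp x j < 0) /\ (0 < stoich sm sp y j).

Definition conservative (R : realFieldType) (n r : nat) (sm sp : 'M[nat]_(n, r))
  : Prop :=
  exists m : 'rV[R]_n, (forall x : 'I_n, 0 < m 0 x) /\ m *m stoichR R sm sp = 0.

(* Vectors of R^X are written as row vectors: im A^T is the row space of A,
   ker S^T = { v | v *m S = 0 } is the row space of kermx S. *)
Definition sf_realization (R : realFieldType) (n r a : nat)
  (sm sp : 'M[nat]_(n, r)) (A : 'M[nat]_(a, n)) : Prop :=
  (forall x : 'I_n, exists i : 'I_a, A i x != 0%N) /\
  (map_mx (fun k : nat => k%:R : R) A == kermx (stoichR R sm sp))%MS.

Definition has_sf_realization (R : realFieldType) (n r : nat)
  (sm sp : 'M[nat]_(n, r)) : Prop :=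
  exists (a : nat) (A : 'M[nat]_(a, n)), (0 < a)%N /\ sf_realization R sm sp A.

(* Main.v *)
Require Import Defs.
From HB Require Import structures.
From mathcomp Require Import all_boot all_order all_algebra.
From mathcomp Require Import ring lra zify.
Set Implicit Arguments. Unset Strict Implicit. Unset Printing Implicit Defensive.
Import Order.TTheory GRing.Theory Num.Theory.
Local Open Scope ring_scope.

Lemma int_scale (I : finType) (g : I -> rat) i :
  ((numq ((\prod_j denq (g j))%:~R * g i))%:~R : rat) = (\prod_j denq (g j))%:~R * g i.
Proof.
rewrite (bigD1 i) //=.
have -> : ((denq (g i) * \prod_(j | j != i) denq (g j))%:~R * g i : rat)
   = (numq (g i) * \prod_(j | j != i) denq (g j))%:~R.
  by rewrite !intrM numqE; ring.
by rewrite numq_int.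
Qed.

Lemma ex_nat_ge_abs (I : finType) (h : I -> int) : exists N : nat, forall i, (`|h i| <= N)%N.
Proof.
exists (\sum_i `|h i|)%N => i.
by rewrite (bigD1 i) //= leq_addr.
Qed.

Lemma prod_denq_gt0 (I : finType) (g : I -> rat) : 0 < \prod_j denq (g j).
Proof. by apply: prodr_gt0 => j _; exact: denq_gt0. Qed.

Section Dot.
Variable R : realFieldType.
Variable f : {rmorphism rat -> R}.

Fixpoint dot (c : seq rat) (y : seq R) : R :=
  match c, y with a :: c', b :: y' => f a * b + dot c' y' | _, _ => 0 end.

Fixpoint addl (p q : seq rat) : seq rat :=
  match p with
  | [::] => q
  | a :: p' => match q with [::] => p | b :: q' => (a + b) :: addl p' q' end
  end.

Definition scl (al : rat) (p : seq rat) := map (fun a => al * a) p.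

Lemma dot_cons c b y : dot c (b :: y) = f (head 0 c) * b + dot (behead c) y.
Proof. by case: c => [|a c] /=; rewrite ?rmorph0 ?mul0r ?addr0. Qed.

Lemma dot_nil c : dot c [::] = 0.
Proof. by case: c. Qed.

Lemma dot_addl p q y : dot (addl p q) y = dot p y + dot q y.
Proof.
elim: p q y => [|a p IH] [|b q] [|u y] //=; rewrite ?add0r ?addr0 //.
by rewrite IH rmorphD /=; ring.
Qed.

Lemma dot_scl al p y : dot (scl al p) y = f al * dot p y.
Proof.
elim: p y => [|a p IH] [|u y] /=; rewrite ?mulr0 //.
by rewrite IH rmorphM /=; ring.
Qed.

Lemma dot_map (I : eqType) (s : seq I) u v :
  dot (map u s) (map v s) = \sum_(i <- s) f (u i) * v i.
Proof. by elim: s => [|i s IH] /=; rewrite ?big_nil ?big_cons ?IH. Qed.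

End Dot.
Lemma sep_above (a : rat) (U : seq rat) : (forall u, u \in U -> a < u) ->
  exists z, a < z /\ (forall u, u \in U -> z < u).
Proof.
elim: U => [|u U IH] H; first by exists (a + 1); split => //; lra.
have [|z [az zU]] := IH; first by move=> v vU; apply: H; rewrite inE vU orbT.
have au : a < u by apply: H; rewrite inE eqxx.
exists (Num.min z ((a + u) / 2)); split.
  by rewrite lt_min az /=; lra.
move=> v; rewrite inE => /orP [/eqP ->|vU].
  by rewrite gt_min; apply/orP; right; lra.
by rewrite gt_min zU.
Qed.

Lemma sep_below (U : seq rat) : exists z, forall u, u \in U -> z < u.
Proof.
elim: U => [|u U [z zU]]; first by exists 0.
exists (Num.min z (u - 1)) => v; rewrite inE => /orP [/eqP ->|vU].
  by rewrite gt_min; apply/orP; right; lra.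
by rewrite gt_min zU.
Qed.

Lemma sep (L U : seq rat) :
  (forall l u, l \in L -> u \in U -> l < u) ->
  exists z, (forall l, l \in L -> l < z) /\ (forall u, u \in U -> z < u).
Proof.
elim: L => [|l L IH] H.
  by have [z zU] := sep_below U; exists z.
have [|z [zL zU]] := IH.
  by move=> l' u lL uU; apply: H => //; rewrite inE lL orbT.
have [lz | zl] := ltP l z.
  by exists z; split => // l'; rewrite inE => /orP [/eqP ->|]; last exact: zL.
have [|w [lw wU]] := sep_above (U := U) (a := l).
  by move=> u uU; apply: H => //; rewrite inE eqxx.
exists w; split => // l'; rewrite inE => /orP [/eqP ->|/zL] //.
move=> l'z; apply: lt_le_trans l'z _; exact: le_trans zl (ltW lw).
Qed.

Lemma FM (R : realFieldType) k : forall (C : seq (seq rat)) (y : seq R), size y = k ->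
  (forall c, c \in C -> 0 < dot (@ratr R) c y) ->
  exists z : seq rat, size z = k /\ forall c, c \in C -> 0 < dot (@idfun rat) c z.
Proof.
elim: k => [|k IH] C y.
  move/size0nil => -> H; exists [::]; split => // c /H.
  by rewrite dot_nil dot_nil ltxx.
case: y => [|b y] //= [sy] H.
pose hd := head (0 : rat); pose tl := @behead rat.
pose Cp := [seq c <- C | 0 < hd c]; pose Cn := [seq c <- C | hd c < 0].
pose C' := [seq tl c | c <- C & hd c == 0] ++
  [seq addl (scl (- hd q) (tl p)) (scl (hd p) (tl q)) | p <- Cp, q <- Cn].
have [|z [sz Hz]] := IH C' y sy.
  move=> c'; rewrite mem_cat => /orP [].
    case/mapP => c; rewrite mem_filter => /andP [/eqP h0 cC] ->.
    by have := H _ cC; rewrite dot_cons -/(hd c) h0 rmorph0 mul0r add0r.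
  case/allpairsP => [[p q] /= [pC qC ->]].
  move: pC qC; rewrite !mem_filter => /andP [hp pC] /andP [hq qC].
  have := H _ pC; have := H _ qC; rewrite !dot_cons dot_addl !dot_scl.
  rewrite rmorphN /=.
  rewrite -(ltr0q R) in hp; rewrite -(ltr_rat R) rmorph0 in hq.
  move: (@ratr R (hd p)) (@ratr R (hd q)) hp hq => a1 a2 hp hq.
  rewrite -/(hd p) -/(hd q) -/(tl p) -/(tl q).
  move: (dot _ (tl p) y) (dot _ (tl q) y) => dp dq h2 h1.
  nra.
pose dz c := dot (@idfun rat) (tl c) z.
pose L := [seq - dz c / hd c | c <- Cp]; pose U := [seq - dz c / hd c | c <- Cn].
have [|z0 [Lz zU]] := sep (L := L) (U := U).
  move=> l u /mapP [p pC el] /mapP [q qC eu].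
  have : (p, q) \in [seq (p, q) | p <- Cp, q <- Cn] by apply/allpairsP; exists (p, q).
  move=> _.
  have hpq : addl (scl (- hd q) (tl p)) (scl (hd p) (tl q)) \in C'.
    by rewrite mem_cat; apply/orP; right; apply/allpairsP; exists (p, q).
  move: pC qC; rewrite !mem_filter => /andP [hp _] /andP [hq _].
  have := Hz _ hpq; rewrite dot_addl !dot_scl /= -/(dz p) -/(dz q).
  rewrite el eu.
  set l1 := - dz p / hd p; set u1 := - dz q / hd q.
  have -> : dz p = - hd p * l1 by rewrite /l1; field; rewrite gt_eqF.
  have -> : dz q = - hd q * u1 by rewrite /u1; field; rewrite lt_eqF.
  move: (hd p) (hd q) hp hq => a1 a2 hp hq h.
  have hm : a1 * a2 < 0 by nra.
  have e : - a2 * (- a1 * l1) + a1 * (- a2 * u1) = (a1 * a2) * (l1 - u1) by ring.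
  rewrite e in h; move: (a1 * a2) hm h => m hm h; nra.
exists (z0 :: z); split; first by rewrite /= sz.
move=> c cC; rewrite dot_cons /= -/(hd c) -/(tl c) -/(dz c).
case: (ltrgtP (hd c) 0) => hc.
- have : - dz c / hd c \in U by apply/map_f; rewrite mem_filter hc.
  move/zU; set u := - dz c / hd c.
  have -> : dz c = - hd c * u by rewrite /u; field; rewrite lt_eqF.
  move: (hd c) hc => a hc; nra.
- have : - dz c / hd c \in L by apply/map_f; rewrite mem_filter hc.
  move/Lz; set u := - dz c / hd c.
  have -> : dz c = - hd c * u by rewrite /u; field; rewrite gt_eqF.
  move: (hd c) hc => a hc; nra.
- rewrite hc mul0r add0r; apply: Hz; rewrite mem_cat; apply/orP; left.
  by apply/mapP; exists c => //; rewrite mem_filter hc eqxx.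
Qed.

Lemma pos_rat_vec (R : realFieldType) (n : nat) (B : 'M[rat]_n) (w : 'rV[R]_n) :
  (forall x, 0 < (w *m map_mx (@ratr R) B) 0 x) ->
  exists q : 'rV[rat]_n, forall x, 0 < (q *m B) 0 x.
Proof.
move=> Hw.
pose C := [seq map (fun i => B i x) (enum 'I_n) | x <- enum 'I_n].
pose y := map (fun i => w 0 i) (enum 'I_n).
have [||z [sz Hz]] := FM (k := n) (C := C) (y := y).
- by rewrite size_map size_enum_ord.
- move=> c /mapP [x _ ->]; rewrite dot_map.
  have := Hw x; rewrite !mxE big_enum /=.
  by under eq_bigr do rewrite mxE mulrC.
exists (\row_i nth 0 z i) => x.
have ez : z = map (fun i : 'I_n => (\row_i nth 0 z i) 0 i) (enum 'I_n).
  rewrite -{1}(mkseq_nth 0 z) sz /mkseq -val_enum_ord -map_comp.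
  by apply: eq_map => i; rewrite mxE.
have := Hz (map (fun i => B i x) (enum 'I_n)) (map_f _ (mem_enum _ x)).
rewrite [X in dot _ _ X]ez dot_map big_enum /= => h.
rewrite mxE; apply: (lt_le_trans h); rewrite le_eqVlt; apply/orP; left; apply/eqP.
by apply: eq_bigr => i _; rewrite mulrC.
Qed.
Lemma dir1 (R : realFieldType) (n r : nat) (sm sp : 'M[nat]_(n, r)) :
  has_sf_realization R sm sp -> conservative R sm sp.
Proof.
move=> [a [A [a0 [cols /andP [sub1 _]]]]].
set AR := map_mx _ A in sub1.
exists ((const_mx 1 : 'rV[R]_a) *m AR); split.
  move=> x; rewrite !mxE.
  under eq_bigr do rewrite !mxE mul1r.
  rewrite -natr_sum ltr0n.
  have [i Ai] := cols x.
  by rewrite (bigD1 i) //= ltn_addr // lt0n.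
by apply/sub_kermxP; exact: submx_trans (submxMl _ _) sub1.
Qed.

Lemma dir2 (R : realFieldType) (n r : nat) (sm sp : 'M[nat]_(n, r)) :
  conservative R sm sp -> has_sf_realization R sm sp.
Proof.
move=> [m [mpos mker]].
pose SQ : 'M[rat]_(n, r) := map_mx (fun z : int => z%:~R) (stoich sm sp).
have eSR : stoichR R sm sp = map_mx (@ratr R) SQ.
  by apply/matrixP => i j; rewrite !mxE ratr_int.
pose B := kermx SQ.
have eK : kermx (stoichR R sm sp) = map_mx (@ratr R) B by rewrite eSR map_kermx.
have mB : (m <= kermx (stoichR R sm sp))%MS by apply/sub_kermxP.
rewrite eK in mB; case/submxP: mB => w ew.
have [|q qpos] := pos_rat_vec (w := w) (B := B).
  by move=> x; rewrite -ew.
pose p := q *m B.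
pose i0 : 'I_(1 + n) := lshift n (ord0 : 'I_1).
have [M [M0 sMB0 sBM0]] : exists M : 'M[rat]_(1 + n, n),
    [/\ forall x, M i0 x = p 0 x, (M <= B)%MS & (B <= M)%MS].
  exists (col_mx p B); split.
  - by move=> x; rewrite /i0 col_mxEu.
  - by rewrite col_mx_sub submx_refl andbT /p submxMl.
  - apply: (submx_trans _ (submxMl (row_mx 0 1%:M) (col_mx p B))).
    by rewrite mul_row_col mul0mx add0r mul1mx.
pose g := fun k : 'I_(1 + n) * 'I_n => M k.1 k.2.
pose D : int := \prod_k denq (g k).
have Dpos : 0 < D by exact: prod_denq_gt0.
pose Zm := fun i x => numq (D%:~R * M i x).
have eZ : forall i x, ((Zm i x)%:~R : rat) = D%:~R * M i x.
  by move=> i x; rewrite /Zm /D (int_scale g (i, x)).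
have Z0 : forall x, 0 < Zm i0 x.
  move=> x; rewrite -(ltr0z rat) eZ M0; apply: mulr_gt0.
    by rewrite ltr0z.
  exact: qpos.
have [N HN] := ex_nat_ge_abs (fun k : 'I_(1 + n) * 'I_n => Zm k.1 k.2).
have Znn : forall i x, 0 <= Zm i x + N%:Z * Zm i0 x.
  move=> i x; have h1 := HN (i, x); have h2 := Z0 x; simpl in h1.
  move: (Zm i x) (Zm i0 x) h1 h2 => a b h1 h2; nia.
pose A : 'M[nat]_(1 + n, n) := \matrix_(i, x) absz (Zm i x + N%:Z * Zm i0 x).
exists (1 + n)%N, A; split => //; split.
  move=> x; exists i0; rewrite mxE -lt0n absz_gt0.
  have := Z0 x; move: (Zm i0 x) => b hb; nia.
set AR := map_mx _ A.
pose MR := map_mx (@ratr R) M.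
have sMB : (MR <= map_mx (@ratr R) B)%MS by rewrite map_submx.
have sBM : (map_mx (@ratr R) B <= MR)%MS by rewrite map_submx.
pose d : R := D%:~R.
have dnz : d != 0 by rewrite /d intr_eq0 gt_eqF.
have eA : forall i x, AR i x = d * (MR i x + N%:R * MR i0 x).
  move=> i x; rewrite !mxE.
  rewrite -[(absz _)%:R]/(((absz (Zm i x + N%:Z * Zm i0 x))%:Z)%:~R : R).
  rewrite gez0_abs // intrD intrM -!(ratr_int R) !eZ !rmorphM /= !ratr_int.
  rewrite -pmulrn /d; ring.
clearbody AR MR.
have sAM : (AR <= MR)%MS.
  apply/row_subP => i.
  have -> : row i AR = d *: (row i MR + N%:R *: row i0 MR).
    by apply/rowP => x; rewrite !mxE eA.
  by apply: scalemx_sub; apply: addmx_sub; [|apply: scalemx_sub]; exact: row_sub.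
have s0 : (row i0 MR <= AR)%MS.
  have -> : row i0 MR = (d * (N%:R + 1))^-1 *: row i0 AR.
    apply/rowP => x; rewrite !mxE eA; field.
    by rewrite -/d dnz andbT natr1 pnatr_eq0.
  by apply: scalemx_sub; exact: row_sub.
have sMA : (MR <= AR)%MS.
  apply/row_subP => i.
  have -> : row i MR = d^-1 *: row i AR + (- N%:R) *: row i0 MR.
    by apply/rowP => x; rewrite !mxE eA; field.
  by apply: addmx_sub; [apply: scalemx_sub; exact: row_sub | exact: scalemx_sub].
rewrite eK; apply/andP; split.
  exact: submx_trans sAM sMB.
exact: submx_trans sBM sMA.
Qed.

Theorem proposition10 (R : realFieldType) (n r : nat) (sm sp : 'M[nat]_(n, r)) :
  (0 < n)%N -> (0 < r)%N -> closed_RN sm sp ->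
  (has_sf_realization R sm sp <-> conservative R sm sp).
Proof.
move=> _ _ _; split; [exact: dir1 | exact: dir2].
Qed.
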